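(* Let $d\ge 2$ and let $P_1,\dots,P_m$ be pumpkin graphs all of degree $d$, where $P_i$ has edge length $\ell_i>0$ (lengths may differ between different $P_i$). For a permutation $\sigma$ of $\{1,\dots,m\}$, let $C_\sigma$ be the chain $P_{\sigma(1)},P_{\sigma(2)},\dots,P_{\sigma(m)}$, i.e. the graph obtained by identifying the second vertex of $P_{\sigma(i)}$ with the first vertex of $P_{\sigma(i+1)}$ for $i=1,\dots,m-1$; its two end vertices are the first vertex $a_\sigma$ of $P_{\sigma(1)}$ and the second vertex $b_\sigma$ of $P_{\sigma(m)}$. Then: (i) the spectrum of $\mathbf{L}(C_\sigma)$ with standard vertex conditions does not depend on $\sigma$; (ii) more generally, for any compact metric graphs $G$, $H$ with chosen vertices $g\in G$, $h\in H$, the graph obtained from $C_\sigma$ by identifying $a_\sigma$ with $g$ and $b_\sigma$ with $h$ has spectrum independent of $\sigma$; and likewise for any compact graph $G$ with two chosen vertices $g_1,g_2$, the graph obtained by identifying $a_\sigma$ with $g_1$ and $b_\sigma$ with $g_2$ has spectrum independent of $\sigma$. In particular each end vertex of such a chain is a hot vertex.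
   Context: A pumpkin graph of degree $d$ with edge length $\ell$ consists of two vertices joined by $d$ parallel edges, each of length $\ell$ (a loop is regarded as a pumpkin graph of degree $2$, two vertices joined by two edges). On each edge the operator is $\mathbf{L}=-\frac{d^2}{dx^2}$ with standard (Neumann–Kirchhoff) vertex conditions: continuity at each vertex and vanishing sum of outward normal derivatives. Spectra are taken with multiplicities. A vertex of a graph (within a family of isospectral graphs) is called hot if attaching (by identifying one of its vertices with the hot vertex) the same arbitrary compact graph at that vertex in each member of the family yields isospectral graphs. *)

(* Defs.v *)
From HB Require Import structures.
From mathcomp Require Import all_boot all_order all_algebra all_fingroup.
From mathcomp Require Import all_classical all_reals all_analysis.
Set Implicit Arguments. Unset Strict Implicit. Unset Printing Implicit Defensive.
Import Order.TTheory GRing.Theory Num.Theory.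
Local Open Scope ring_scope.

(* A finite metric graph: finite vertex and edge sets, each edge e is the
   interval [0, len e] with 0 glued to vertex [src e] and [len e] glued to
   vertex [tgt e] (loops and multiple edges allowed). *)
Record mgraph (R : realType) := MGraph {
  vert : finType;
  edge : finType;
  src : edge -> vert;
  tgt : edge -> vert;
  len : edge -> R }.

Definition wf_graph (R : realType) (K : mgraph R) : Prop :=
  forall e : edge K, 0 < len e.

(* f is an eigenfunction (possibly zero) of L = -d^2/dx^2 with standard
   (continuity + Kirchhoff) vertex conditions for eigenvalue lam.
   On each edge, f e solves -y'' = lam y (classically; we take the unique
   extension of the solution to the whole line, which determines and is
   determined by its restriction to [0, len e]). *)
Definition eigfun (R : realType) (K : mgraph R) (lam : R)
  (f : edge K -> R -> R) : Prop :=
  exists (f' : edge K -> R -> R) (phi : vert K -> R),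
    [/\ (forall e (x : R), is_derive x (1 : R) (f e) (f' e x) /\
                     is_derive x (1 : R) (f' e) (- (lam * f e x))),
        (forall e, f e 0 = phi (src e) /\ f e (len e) = phi (tgt e)) &
        (forall v, \sum_(e | src e == v) (- f' e 0)
                   + \sum_(e | tgt e == v) f' e (len e) = 0)].

Arguments eigfun {R} K lam f.

Definition mult_ge (R : realType) (K : mgraph R) (lam : R) (k : nat) : Prop :=
  exists F : 'I_k -> edge K -> R -> R,
    (forall i, eigfun K lam (F i)) /\
    (forall c : 'I_k -> R,
        (forall e x, \sum_(i < k) c i * F i e x = 0) -> forall i, c i = 0).

Arguments mult_ge {R} K lam k.

Definition isospectral (R : realType) (K1 K2 : mgraph R) : Prop :=
  forall (lam : R) (k : nat), mult_ge K1 lam k <-> mult_ge K2 lam k.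

Arguments isospectral {R} K1 K2.

Definition empty_graph (R : realType) : mgraph R :=
  @MGraph R void void (fun e => e) (fun e => e) (fun _ => 0).

Definition gsum (R : realType) (G H : mgraph R) : mgraph R :=
  @MGraph R (vert G + vert H)%type (edge G + edge H)%type
    (fun e => match e with inl e => inl (src e) | inr e => inr (src e) end)
    (fun e => match e with inl e => inl (tgt e) | inr e => inr (tgt e) end)
    (fun e => match e with inl e => len e | inr e => len e end).

(* vertex j (0 <= j <= m) of the chain of m pumpkins; vertex 0 is the end
   vertex a, vertex m is the end vertex b, vertex j (0<j<m) joins the j-th
   and (j+1)-th pumpkins. *)
Definition chain_vert (R : realType) (K : mgraph R) (oa ob : option (vert K))
  (m : nat) (j : 'I_m.+1) : (vert K + 'I_m.+1)%type :=
  if val j == 0%N then (if oa is Some g then inl g else inr j)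
  else if val j == m then (if ob is Some h then inl h else inr j)
  else inr j.

Arguments chain_vert {R K} oa ob {m} j.

(* The chain P_{s(1)}, ..., P_{s(m)} of pumpkins of degree d, where the
   i-th pumpkin has edge length l i, glued to the graph K: its end vertex
   a_s identified with oa (if Some) and b_s with ob (if Some).
   Chain edge (j,k) is the k-th parallel edge of the j-th pumpkin in the
   chain (which is P_{s j}), going from chain vertex j to chain vertex j+1. *)
Definition chain_glued (R : realType) (K : mgraph R) (oa ob : option (vert K))
  (d m : nat) (l : 'I_m -> R) (s : {perm 'I_m}) : mgraph R :=
  @MGraph R (vert K + 'I_m.+1)%type (edge K + ('I_m * 'I_d))%type
    (fun e => match e with
              | inl e => inl (src e)
              | inr jk => chain_vert oa ob (widen_ord (leqnSn m) jk.1) end)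
    (fun e => match e with
              | inl e => inl (tgt e)
              | inr jk => chain_vert oa ob (lift ord0 jk.1) end)
    (fun e => match e with
              | inl e => len e
              | inr jk => l (s jk.1) end).

Arguments chain_glued {R} K oa ob d {m} l s.
Arguments wf_graph {R} K.

(* Main.v *)
Require Import Defs.
From HB Require Import structures.
From mathcomp Require Import all_boot all_order all_algebra all_fingroup.
From mathcomp Require Import all_classical all_reals all_analysis.
From mathcomp Require Import ring lra.
Import Order.TTheory GRing.Theory Num.Theory.
Local Open Scope ring_scope.



Section S.
Variable R : realType.

Lemma derE (f : R -> R) (x a b : R) : is_derive x 1 f a -> is_derive x 1 f b -> a = b.
Proof. by move=> [_ <-] [_ <-]. Qed.

Lemma is_derive_fun (f g : R -> R) (x a : R) : f = g -> is_derive x 1 f a -> is_derive x 1 g a.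
Proof. by move=> ->. Qed.

Lemma dsum n (h : 'I_n -> R -> R) (dh : 'I_n -> R -> R) (x : R) :
  (forall i, is_derive x 1 (h i) (dh i x)) ->
  is_derive x 1 (fun y => \sum_(i < n) h i y) (\sum_(i < n) dh i x).
Proof.
move=> H; have := @is_derive_sum R R^o R^o n h x 1 (fun i => dh i x) H.
by apply: is_derive_fun; apply/funext => y; rewrite fct_sumE.
Qed.

Lemma dadd {f g : R -> R} {x a b : R} : is_derive x 1 f a -> is_derive x 1 g b ->
  is_derive x 1 (fun y => f y + g y) (a + b).
Proof. move=> ha hb; exact: (is_deriveD ha hb). Qed.

Lemma dsub {f g : R -> R} {x a b : R} : is_derive x 1 f a -> is_derive x 1 g b ->
  is_derive x 1 (fun y => f y - g y) (a - b).
Proof. move=> ha hb; exact: (is_deriveB ha hb). Qed.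

Lemma dscale {f : R -> R} (k : R) {x a : R} : is_derive x 1 f a ->
  is_derive x 1 (fun y => k * f y) (k * a).
Proof. move=> ha; exact: (is_deriveZ k ha). Qed.

Lemma dmul {f g : R -> R} {x a b : R} : is_derive x 1 f a -> is_derive x 1 g b ->
  is_derive x 1 (fun y => f y * g y) (f x * b + g x * a).
Proof. move=> ha hb; exact: (is_deriveM ha hb). Qed.

Lemma dshift {f : R -> R} {c : R} {x a : R} : is_derive (x + c) 1 f a ->
  is_derive x 1 (fun y => f (y + c)) a.
Proof.
move=> h; have := @is_derive1_comp R f (shift c) x a 1 h (is_derive_shift x 1 c).
by rewrite mulr1.
Qed.

Lemma cst0 (f : R -> R) (x0 : R) : (forall x : R, is_derive x 1 f 0) -> f x0 = 0 -> forall x, f x = 0.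
Proof. by move=> H h0 x; rewrite (@is_derive_0_is_cst R f x x0 H). Qed.

Lemma ode_uniq (lam : R) (h h' : R -> R) (x0 : R) :
  (forall x : R, is_derive x 1 h (h' x) /\ is_derive x 1 h' (- (lam * h x))) ->
  h x0 = 0 -> h' x0 = 0 -> forall x, h x = 0 /\ h' x = 0.
Proof.
move=> H h0 h'0.
case: (ltgtP lam 0) => Hl.
- set k := Num.sqrt (- lam).
  have kk : k * k = - lam by rewrite -expr2 sqr_sqrtr // oppr_ge0 ltW.
  have P1 : forall x, (h' x + k * h x) * expR (- (k * x)) = 0.
    apply: (@cst0 _ x0); last by rewrite h0 h'0 mulr0 addr0 mul0r.
    move=> x; have [d1 d2] := H x.
    have de : is_derive x 1 (fun y => expR (- (k * y))) (expR (- (k * x)) * - (k * 1)).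
      by apply: (is_derive1_comp (f := expR) (g := fun y => - (k * y))).
    have := dmul (dadd d2 (dscale k d1)) de.
    move=> HH; apply: is_derive_eq HH _.
    have : lam = - (k * k) by rewrite kk opprK.
    move=> ->; ring.
  have P2 : forall x, (h' x - k * h x) * expR (k * x) = 0.
    apply: (@cst0 _ x0); last by rewrite h0 h'0 mulr0 subr0 mul0r.
    move=> x; have [d1 d2] := H x.
    have de : is_derive x 1 (fun y => expR (k * y)) (expR (k * x) * (k * 1)).
      by apply: (is_derive1_comp (f := expR) (g := fun y => (k * y))).
    have := dmul (dsub d2 (dscale k d1)) de.
    move=> HH; apply: is_derive_eq HH _.
    have : lam = - (k * k) by rewrite kk opprK.
    move=> ->; ring.
  have kp : 0 < k by rewrite sqrtr_gt0 oppr_gt0.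
  move=> x; have := P1 x; have := P2 x.
  move=> /eqP; rewrite mulf_eq0 => /orP [/eqP e2|]; last by rewrite gt_eqF ?expR_gt0.
  move=> /eqP; rewrite mulf_eq0 => /orP [/eqP e1|]; last by rewrite gt_eqF ?expR_gt0.
  have hx : h x = 0.
    have : (k + k) * h x = 0 by rewrite mulrDl; lra.
    by move/eqP; rewrite mulf_eq0 gt_eqF ?addr_gt0 //= => /eqP.
  by split => //; move: e1; rewrite hx mulr0 addr0.
- set E := fun x => h' x * h' x + lam * (h x * h x).
  have E0 : forall x, E x = 0.
    apply: (@cst0 _ x0); last by rewrite /E h0 h'0; ring.
    move=> x; have [d1 d2] := H x.
    have := dadd (dmul d2 d2) (dscale lam (dmul d1 d1)).
    by move=> HH; apply: is_derive_eq HH _; ring.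
  move=> x; have := E0 x; rewrite /E => e.
  have a : 0 <= h' x * h' x by rewrite -expr2 sqr_ge0.
  have b : 0 <= lam * (h x * h x) by apply: mulr_ge0; [exact: ltW | rewrite -expr2 sqr_ge0].
  have c1 : h' x * h' x = 0 by lra.
  have c2 : lam * (h x * h x) = 0 by lra.
  move: c1 c2 => /eqP; rewrite mulf_eq0 orbb => /eqP ->.
  by move/eqP; rewrite !mulf_eq0 gt_eqF //= orbb => /eqP.
- subst lam.
  have A : forall x, h' x = 0.
    apply: (@cst0 _ x0) => // x; have [_ d2] := H x.
    by apply: is_derive_eq d2 _; rewrite mul0r oppr0.
  have B : forall x, h x = 0.
    by apply: (@cst0 _ x0) => // x; have [d1 _] := H x; rewrite -(A x).
  by move=> x; rewrite A B.
Qed.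
End S.
Arguments dadd {R f g x a b}.
Arguments dsub {R f g x a b}.
Arguments dscale {R f} k {x a}.
Arguments dmul {R f g x a b}.
Arguments dshift {R f c x a}.



Section Chain.
Variable R : realType.
Variable K : mgraph R.
Variables (oa ob : option (vert K)) (d n : nat).
Local Notation m := n.+1.
Variable (l : 'I_m -> R).

Definition G s := chain_glued K oa ob d l s.
Definition cvn (j : nat) : (vert K + 'I_m.+1)%type := chain_vert oa ob (inord j : 'I_m.+1).

Lemma src_inr s (jk : 'I_m * 'I_d) : @src R (G s) (inr jk) = cvn jk.1.
Proof.
rewrite /= /cvn; congr chain_vert; apply: ord_inj.
by rewrite /= inordK // ltnS ltnW.
Qed.

Lemma tgt_inr s (jk : 'I_m * 'I_d) : @tgt R (G s) (inr jk) = cvn jk.1.+1.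
Proof.
rewrite /= /cvn; congr chain_vert; apply: ord_inj.
by rewrite /= inordK // ltnS.
Qed.

Lemma sum_ind (b : bool) (n0 : nat) (X : 'I_n0 -> R) :
  b%:R * \sum_(k < n0) X k = \sum_(k < n0) (if b then X k else 0).
Proof. by case: b; rewrite ?mul1r ?mul0r // big1. Qed.

Definition KK {s} (F' : edge (G s) -> R -> R) (v : vert (G s)) :=
  \sum_(e : edge K | inl (src e) == v) - F' (inl e) 0
  + \sum_(e : edge K | inl (tgt e) == v) F' (inl e) (len e).

Lemma KD s (F' : edge (G s) -> R -> R) (v : vert (G s)) :
  \sum_(e | src e == v) (- F' e 0) + \sum_(e | tgt e == v) F' e (len e) =
  KK F' v + \sum_(j < m) ((cvn j == v)%:R * - (\sum_(k < d) F' (inr (j, k)) 0)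
       + (cvn j.+1 == v)%:R * \sum_(k < d) F' (inr (j, k)) (l (s j))).
Proof.
rewrite !big_sumType /KK /= addrACA; congr (_ + _).
rewrite big_split /=; congr (_ + _).
- rewrite big_mkcond /=; under [RHS]eq_bigr do rewrite -sumrN sum_ind.
  rewrite pair_bigA /=; apply: eq_bigr => -[j k] _ /=.
  by rewrite -[chain_vert _ _ _]/(@src R (G s) (inr (j, k))) src_inr.
- rewrite big_mkcond /=; under [RHS]eq_bigr do rewrite sum_ind.
  rewrite pair_bigA /=; apply: eq_bigr => -[j k] _ /=.
  by rewrite -[chain_vert _ _ _]/(@tgt R (G s) (inr (j, k))) tgt_inr.
Qed.


Hypothesis hd : (0 < d)%N.
Let E := (edge K + 'I_m * 'I_d)%type.

Definition O (t : {perm 'I_m}) (j : nat) : R := \sum_(q < m | (q < j)%N) l (t q).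

Lemma O0 t : O t 0 = 0.
Proof. by rewrite /O big_pred0. Qed.

Lemma OS t (j : 'I_m) : O t j.+1 = O t j + l (t j).
Proof.
rewrite /O (bigD1 j) ?ltnSn //= addrC; congr (_ + _).
by apply: eq_bigl => q; rewrite ltnS ltn_neqAle andbC.
Qed.

Lemma Om t : O t m = \sum_(i < m) l i.
Proof.
rewrite /O (eq_bigl xpredT) => [|q]; last by rewrite /= ltn_ord.
by rewrite [RHS](reindex_inj (@perm_inj _ t)).
Qed.

Lemma Oinord t (j : nat) : (j <= m)%N -> O t (inord j : 'I_m.+1) = O t j.
Proof. by move=> h; rewrite inordK. Qed.

Definition mean (F : E -> R -> R) (p : nat) (x : R) : R :=
  (d%:R)^-1 * \sum_(k < d) F (inr (inord p, k)) x.

Lemma dn0 : (d%:R : R) != 0.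
Proof. rewrite pnatr_eq0; by case: d hd. Qed.

Lemma sum_mean F p y : \sum_(k < d) F (inr (inord p, k)) y = d%:R * mean F p y.
Proof. by rewrite /mean mulrA (divff dn0) mul1r. Qed.

Lemma mean_cst F p y c : (forall k, F (inr (inord p, k)) y = c) -> mean F p y = c.
Proof.
move=> H; rewrite /mean (eq_bigr (fun _ => c)) // sumr_const card_ord.
by rewrite -[c *+ _]mulr_natl mulKf // dn0.
Qed.

Lemma mean_der (F F' : E -> R -> R) p (x : R) :
  (forall e, is_derive x 1 (F e) (F' e x)) ->
  is_derive x 1 (fun y => mean F p y) (mean F' p x).
Proof.
move=> H; rewrite /mean; apply: dscale.
exact: (@dsum R d (fun k => F (inr (inord p, k))) (fun k => F' (inr (inord p, k))) x (fun k => H _)).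
Qed.

Lemma mean_lin (lam : R) (F F' : E -> R -> R) p (x : R) :
  (forall k, F' (inr (inord p, k)) x = - (lam * F (inr (inord p, k)) x)) ->
  mean F' p x = - (lam * mean F p x).
Proof.
move=> H; rewrite /mean (eq_bigr _ (fun k _ => H k)) sumrN -mulr_sumr mulrN mulrCA.
done.
Qed.

Lemma ieq (a b : nat) : (a <= m)%N -> (b <= m)%N ->
  ((inr (inord a : 'I_m.+1) : (vert K + 'I_m.+1)%type) == inr (inord b)) = (a == b).
Proof.
move=> ha hb; rewrite /eq_op /= -val_eqE /=.
by rewrite (@inordK m a) ?ltnS // (@inordK m b) ?ltnS.
Qed.

Lemma cvn_int (i j : nat) : (0 < i < m)%N -> (j <= m)%N -> (cvn j == cvn i) = (j == i).
Proof.
move=> /andP [i0 im] jm.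
have vi : forall a, (a <= m)%N -> val (inord a : 'I_m.+1) = a by move=> a h; exact: (@inordK m a h).
rewrite /cvn /chain_vert (vi j jm) (vi i (ltnW im)).
rewrite (gtn_eqF i0) (ltn_eqF im).
have [->|j0] := eqVneq j 0%N.
  rewrite /=; case: oa => [a|]; last by rewrite ieq // ltnW.
  by rewrite [RHS]eq_sym (gtn_eqF i0).

have [->|jm'] := eqVneq j m.
  rewrite ?eqxx /=; case: ob => [b|]; last by rewrite ieq // ltnW.
  by rewrite (gtn_eqF im).
by rewrite ieq // ltnW.
Qed.

Lemma sum_delta (a : nat) (X : 'I_m -> R) : (a < m)%N ->
  \sum_(j < m) (j == a :> nat)%:R * X j = X (inord a).
Proof.
move=> am; rewrite (bigD1 (inord a)) //= (@inordK n a am) eqxx mul1r big1 ?addr0 //.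
move=> j /eqP jn; case: eqP => ja; last by rewrite mul0r.
exfalso; apply: jn; apply: ord_inj.
by rewrite ja (@inordK n a am).
Qed.


Lemma vinord (a : nat) : (a < m)%N -> val (inord a : 'I_m) = a.
Proof. exact: (@inordK n a). Qed.

Lemma cvn_inr (i : nat) : (0 < i < m)%N -> cvn i = inr (inord i).
Proof.
move=> /andP [i0 im]; rewrite /cvn /chain_vert.
have -> : val (inord i : 'I_m.+1) = i by exact: (@inordK m i (ltnW im)).
by rewrite (gtn_eqF i0) (ltn_eqF im).
Qed.

Lemma meanD lam (f f' : E -> R -> R) :
  (forall e (x : R), is_derive x 1 (f e) (f' e x) /\ is_derive x 1 (f' e) (- (lam * f e x))) ->
  forall p (x : R), is_derive x 1 (fun y => mean f p y) (mean f' p x) /\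
     is_derive x 1 (fun y => mean f' p y) (- (lam * mean f p x)).
Proof.
move=> H p x; split; first by apply: mean_der => e; exact: (H e x).1.
have := @mean_der f' (fun e y => - (lam * f e y)) p x (fun e => (H e x).2).
by rewrite (@mean_lin lam f (fun e y => - (lam * f e y))).
Qed.

Lemma relA s lam (f f' : E -> R -> R) (phi : (vert K + 'I_m.+1)%type -> R) :
 (forall e (x : R), is_derive x 1 (f e) (f' e x) /\ is_derive x 1 (f' e) (- (lam * f e x))) ->
 (forall e : edge (G s), f e 0 = phi (src e) /\ f e (len e) = phi (tgt e)) ->
 (forall v : vert (G s), \sum_(e | src e == v) (- f' e 0) + \sum_(e | tgt e == v) f' e (len e) = 0) ->
 forall (p : nat), (p < m)%N -> forall x,
   mean f p x = mean f 0 (x + O s p) /\ mean f' p x = mean f' 0 (x + O s p).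
Proof.
move=> Hd Hv Hk; elim=> [|p IH] pm x; first by rewrite O0 addr0.
have pm' : (p < m)%N by apply: ltnW.
set c := l (s (inord p)).
pose h y := mean f p.+1 y - mean f p (y + c).
pose h' y := mean f' p.+1 y - mean f' p (y + c).
have MD := @meanD lam f f' Hd.
have U : forall y, h y = 0 /\ h' y = 0.
  apply: (@ode_uniq R lam h h' 0).
  - move=> y; split.
      apply: dsub; first exact: (MD _ _).1.
      by apply: dshift; exact: (MD _ _).1.
    have := dsub (MD p.+1 y).2 (dshift (MD p (y + c)).2).
    by move=> HH; apply: is_derive_eq HH _; rewrite /h; ring.
  - rewrite /h add0r.
    rewrite (@mean_cst f p.+1 0 (phi (cvn p.+1))); last first.
      move=> k; rewrite (Hv (inr (inord p.+1, k))).1 src_inr /=.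
      by rewrite vinord.
    rewrite (@mean_cst f p c (phi (cvn p.+1))) ?subrr // => k.
    rewrite (Hv (inr (inord p, k))).2 tgt_inr /=.
    by rewrite vinord.
  - rewrite /h' add0r.
    have := Hk (cvn p.+1); rewrite KD.
    have -> : KK f' (cvn p.+1) = 0.
      rewrite /KK (@cvn_inr p.+1 pm) !big_pred0 ?addr0 //.
    rewrite add0r.
    under eq_bigr => j _ do rewrite (@cvn_int p.+1 j pm (ltnW (ltn_ord j))) (@cvn_int p.+1 j.+1 pm (ltn_ord j)) eqSS.
    rewrite big_split /= (@sum_delta p.+1 (fun j => - \sum_(k < d) f' (inr (j, k)) 0) pm).
    rewrite (@sum_delta p (fun j => \sum_(k < d) f' (inr (j, k)) (l (s j))) pm').
    rewrite /mean -/c; move=> HH.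
    have -> : \sum_(k < d) f' (inr (inord p.+1, k)) 0 = \sum_(k < d) f' (inr (inord p, k)) c by lra.
    by rewrite subrr.
have E1 : mean f p.+1 x = mean f p (x + c) by have := (U x).1; rewrite /h => /eqP; rewrite subr_eq0 => /eqP.
have E2 : mean f' p.+1 x = mean f' p (x + c) by have := (U x).2; rewrite /h' => /eqP; rewrite subr_eq0 => /eqP.
have Os : O s p.+1 = O s p + c.
  by rewrite -{1}(@vinord p pm') (OS s (inord p)) (@vinord p pm').
rewrite E1 E2 ((IH pm' (x + c)).1) ((IH pm' (x + c)).2) Os; split; congr mean; ring.
Qed.


Definition Tr (s t : {perm 'I_m}) (F : E -> R -> R) : E -> R -> R :=
  fun e => match e with
  | inl e0 => F (inl e0)
  | inr pk => fun x => mean F 0 (x + O t pk.1)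
       + (F (inr ((s^-1)%g (t pk.1), pk.2)) x - mean F ((s^-1)%g (t pk.1)) x)
  end.

Lemma sum_mean' F (q : 'I_m) y : \sum_(k < d) F (inr (q, k)) y = d%:R * mean F q y.
Proof. by rewrite -sum_mean inord_val. Qed.

Lemma meanTr s t F (p : 'I_m) y : mean (Tr s t F) p y = mean F 0 (y + O t p).
Proof.
rewrite {1}/mean /= inord_val big_split /= sumrB sum_mean' !sumr_const !card_ord.
rewrite -[mean F 0 _ *+ _]mulr_natl -[mean F _ y *+ _]mulr_natl subrr addr0.
by rewrite mulKf // dn0.
Qed.

Lemma sumTr s t F (p : 'I_m) y :
  \sum_(k < d) Tr s t F (inr (p, k)) y = d%:R * mean F 0 (y + O t p).
Proof. by rewrite sum_mean' meanTr. Qed.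

Lemma cvn_cases (j : nat) : (j <= m)%N ->
  match cvn j with inl _ => (j == 0%N) || (j == m) | inr j' => val j' == j end.
Proof.
move=> jm; rewrite /cvn /chain_vert.
have -> : val (inord j : 'I_m.+1) = j by exact: (@inordK m j jm).
have [->|j0] := eqVneq j 0%N.
  by case: oa => [a|] //=; rewrite (@inordK m 0).
have [->|jm'] := eqVneq j m.
  by case: ob => [b|] //=; rewrite ?eqxx ?orbT // (@inordK m m).
by rewrite /= (@inordK m j).
Qed.

Lemma TEL (u : {perm 'I_m}) (mf : R -> R) (v : (vert K + 'I_m.+1)%type) :
  \sum_(j < m) ((cvn j == v)%:R * - (d%:R * mf (0 + O u j))
     + (cvn j.+1 == v)%:R * (d%:R * mf (l (u j) + O u j)))
  = (cvn m == v)%:R * (d%:R * mf (\sum_(i < m) l i)) - (cvn 0 == v)%:R * (d%:R * mf 0).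
Proof.
pose a k := (cvn k == v)%:R * (d%:R * mf (O u k)).
have -> : \sum_(j < m) ((cvn j == v)%:R * - (d%:R * mf (0 + O u j))
     + (cvn j.+1 == v)%:R * (d%:R * mf (l (u j) + O u j)))
     = \sum_(j < m) (a j.+1 - a j).
  apply: eq_bigr => j _; rewrite /a OS add0r (addrC (O u j)) mulrN addrC; exact: addrC.
rewrite -(big_mkord (fun _ => true) (fun j => a j.+1 - a j)) telescope_sumr //.
by rewrite /a Om O0.
Qed.

Lemma TrEig s t lam (f : E -> R -> R) :
  eigfun (G s) lam f -> eigfun (G t) lam (Tr s t f).
Proof.
move=> [f' [phi [Hd Hv Hk]]].
have MD := @meanD lam f f' Hd.
have RA := @relA s lam f f' phi Hd Hv Hk.
pose phi' (v : (vert K + 'I_m.+1)%type) :=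
  match v with inl g => phi (inl g) | inr j => mean f 0 (O t j) end.
have VAL : forall j, (j <= m)%N -> phi (cvn j) = mean f 0 (O s j).
  move=> j; rewrite leq_eqVlt => /orP [/eqP ->|jm].
    have M1 : mean f n (l (s (inord n))) = phi (cvn m).
      apply: mean_cst => k; rewrite (Hv (inr (inord n, k))).2 tgt_inr /=.
      by rewrite (@inordK n n).
    rewrite -M1 (RA n (ltnSn n) _).1; congr mean.
    have := OS s (inord n); rewrite (@inordK n n) // => ->.
    by rewrite addrC.
  have M0 : mean f j 0 = phi (cvn j).
    apply: mean_cst => k; rewrite (Hv (inr (inord j, k))).1 src_inr /=.
    by rewrite (@inordK n j).
  by rewrite -M0 (RA j jm 0).1 add0r.
have PHI : forall j, (j <= m)%N -> phi' (cvn j) = mean f 0 (O t j).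
  move=> j jm; have := @cvn_cases j jm; case Hc: (cvn j) => [g|j'] /=.
    move=> /orP [/eqP j0|/eqP jm']; rewrite -[phi (inl g)]/(phi (inl g)) -Hc VAL //.
      by rewrite j0 !O0.
    by rewrite jm' !Om.
  by move=> /eqP ->.
have sq : forall p : 'I_m, s ((s^-1)%g (t p)) = t p by move=> p; rewrite permKV.
exists (Tr s t f'), phi'; split.
- move=> [e0|[p k]] x /=; first exact: Hd.
  split.
    apply: dadd; first by apply: dshift; exact: (MD _ _).1.
    by apply: dsub; [exact: (Hd _ _).1 | exact: (MD _ _).1].
  have := dadd (dshift (MD 0 (x + O t p)).2) (dsub (Hd (inr ((s^-1)%g (t p), k)) x).2 (MD ((s^-1)%g (t p)) x).2).
  by move=> HH; apply: is_derive_eq HH _; ring.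
- move=> [e0|[p k]] /=; first exact: Hv.
  set q := (s^-1)%g (t p).
  have Mq : forall y c, (forall k', f (inr (q, k')) y = c) -> mean f q y = c.
    by move=> y c H; apply: mean_cst => k'; rewrite inord_val.
  split.
  + rewrite (Hv (inr (q, k))).1 (Mq 0 (phi (@src R (G s) (inr (q, k))))) ?subrr ?addr0; last first.
      by move=> k'; rewrite (Hv (inr (q, k'))).1 !src_inr.
    rewrite add0r -[chain_vert _ _ _]/(@src R (G t) (inr (p, k))) src_inr PHI //.
    exact: ltnW.
  + have lq : l (t p) = l (s q) by rewrite sq.
    rewrite lq (Hv (inr (q, k))).2 (Mq _ (phi (@tgt R (G s) (inr (q, k))))) ?subrr ?addr0; last first.
      by move=> k'; rewrite (Hv (inr (q, k'))).2 !tgt_inr.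
    rewrite -[chain_vert _ _ (lift _ _)]/(@tgt R (G t) (inr (p, k))) tgt_inr PHI //.
    by rewrite OS -lq addrC.
- move=> v; rewrite KD.
  have -> : KK (Tr s t f') v = KK f' v by [].
  under eq_bigr => j _ do rewrite !sumTr.
  rewrite TEL.
  have := Hk v; rewrite KD.
  under eq_bigr => j _ do rewrite !sum_mean' !(RA j (ltn_ord j) _).2.
  by rewrite TEL.
Qed.


Lemma meanTr0 s t F y : mean (Tr s t F) 0 y = mean F 0 y.
Proof. by have := meanTr s t F ord0 y; rewrite /= O0 addr0. Qed.

Lemma TrInv s t lam (f : E -> R -> R) :
  eigfun (G s) lam f -> forall e x, Tr t s (Tr s t f) e x = f e x.
Proof.
move=> [f' [phi [Hd Hv Hk]]].
have RA := @relA s lam f f' phi Hd Hv Hk.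
move=> [e0|[p k]] x //=.
rewrite meanTr0 meanTr /= permKV permK (RA p (ltn_ord p) x).1.
by ring.
Qed.

Lemma meanL N (c : 'I_N -> R) (H : 'I_N -> E -> R -> R) p y :
  mean (fun e y => \sum_(i < N) c i * H i e y) p y = \sum_(i < N) c i * mean (H i) p y.
Proof.
rewrite /mean exchange_big mulr_sumr; apply: eq_bigr => i _.
by rewrite -mulr_sumr mulrCA.
Qed.

Lemma TrLin N (c : 'I_N -> R) (H : 'I_N -> E -> R -> R) u w e x :
  \sum_(i < N) c i * Tr u w (H i) e x = Tr u w (fun e y => \sum_(i < N) c i * H i e y) e x.
Proof.
case: e => [e0|[p k]] //=.
under eq_bigr => i _ do rewrite mulrDr mulrBr.
by rewrite big_split sumrB /= !meanL.
Qed.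

Lemma Tr0 u w e x : Tr u w (fun _ _ => 0) e x = 0.
Proof.
case: e => [e0|[p k]] //=.
by rewrite /mean !big1 // mulr0 subrr addr0.
Qed.

Lemma multT s t lam k : mult_ge (G s) lam k -> mult_ge (G t) lam k.
Proof.
move=> [F [HF Hind]]; exists (fun i => Tr s t (F i)); split.
  by move=> i; apply: TrEig.
move=> c Hc; apply: Hind => e x.
rewrite (eq_bigr (fun i => c i * Tr t s (Tr s t (F i)) e x)); last first.
  by move=> i _; rewrite (@TrInv s t lam (F i) (HF i)).
rewrite TrLin.
have -> : (fun e y => \sum_(i < k) c i * Tr s t (F i) e y) = (fun _ _ => 0).
  by apply/funext => e'; apply/funext => y; exact: Hc.
exact: Tr0.
Qed.

Lemma iso s t : isospectral (G s) (G t).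
Proof. by move=> lam k; split; apply: multT. Qed.

End Chain.

Lemma iso_chain (R : realType) (K : mgraph R) (oa ob : option (vert K)) (d m : nat)
  (l : 'I_m -> R) : (0 < d)%N -> (0 < m)%N -> forall s t : {perm 'I_m},
  isospectral (chain_glued K oa ob d l s) (chain_glued K oa ob d l t).
Proof.
move=> hd; case: m l => [//|n] l _ s t.
exact: (@iso R K oa ob d n l hd s t).
Qed.

Theorem theorem2 (R : realType) (d m : nat) (l : 'I_m -> R) :
  (2 <= d)%N -> (0 < m)%N -> (forall i, 0 < l i) ->
  [/\ (* (i) the bare chains are isospectral *)
      (forall s t : {perm 'I_m},
         isospectral (chain_glued (empty_graph R) None None d l s)
                     (chain_glued (empty_graph R) None None d l t)),
      (* (ii) a_s glued to g in G, b_s glued to h in H *)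
      (forall (G H : mgraph R) (g : vert G) (h : vert H),
         wf_graph G -> wf_graph H ->
         forall s t : {perm 'I_m},
           isospectral
             (chain_glued (gsum G H) (Some (inl g)) (Some (inr h)) d l s)
             (chain_glued (gsum G H) (Some (inl g)) (Some (inr h)) d l t)),
      (* (ii') a_s glued to g1, b_s glued to g2, both in G *)
      (forall (G : mgraph R) (g1 g2 : vert G), wf_graph G ->
         forall s t : {perm 'I_m},
           isospectral (chain_glued G (Some g1) (Some g2) d l s)
                       (chain_glued G (Some g1) (Some g2) d l t)) &
      (* hot vertices: attaching G at a_s alone, or at b_s alone *)
      (forall (G : mgraph R) (g : vert G), wf_graph G ->
         forall s t : {perm 'I_m},
           isospectral (chain_glued G (Some g) None d l s)
                       (chain_glued G (Some g) None d l t) /\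
           isospectral (chain_glued G None (Some g) d l s)
                       (chain_glued G None (Some g) d l t))].
Proof.
move=> d2 m0 _; have hd : (0 < d)%N by case: d d2.
split.
- by move=> s t; exact: iso_chain.
- by move=> G H g h _ _ s t; exact: iso_chain.
- by move=> G g1 g2 _ s t; exact: iso_chain.
- by move=> G g _ s t; split; exact: iso_chain.
Qed.
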